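(* Let $c\geq 1$ be an odd integer and let $a,b\geq 2$ be coprime integers. Let $\varphi:F(x,y)\to\mathbb{Z}_2=\{1,-1\}$ be the unique nontrivial homomorphism with $\varphi(x)^a\varphi(y)^b=1$ (namely $\varphi(x)=-1,\varphi(y)=1$ if $a$ is even and $b$ odd; $\varphi(x)=1,\varphi(y)=-1$ if $a$ is odd and $b$ even; $\varphi(x)=\varphi(y)=-1$ if $a,b$ are both odd). Then there exists a word $r\in F(x,y)$ with $\delta_x(r)=a$ and $\delta_y(r)=b$ (so that $H^2(K_r;\mathbb{Z})=0$) such that, letting $\beta:\Pi=F(x,y)/N(r)\to\mathbb{Z}_2$ be the homomorphism induced by $\varphi$, one has $H^2(K_r;{}_{\beta}\mathbb{Z})\cong\mathbb{Z}/c\mathbb{Z}$.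
   Context: $F(x,y)$ is the free group on $x,y$; for $r\in F(x,y)$, $\delta_x(r)$ and $\delta_y(r)$ are the exponent sums of $x$ and $y$ in $r$, $N(r)$ is the normal closure of $r$, and $K_r$ is the model two-complex of the presentation $\langle x,y\mid r\rangle$ (one $0$-cell, two $1$-cells, one $2$-cell attached along $r$), with fundamental group $\Pi=F(x,y)/N(r)$. Since $\varphi(r)=\varphi(x)^{\delta_x(r)}\varphi(y)^{\delta_y(r)}=1$, $\varphi$ induces $\beta$ on $\Pi$. $\mathbb{Z}_2$ is identified with $\mathrm{Aut}(\mathbb{Z})$, so $\beta$ is a local integer coefficient system on $K_r$ and $H^2(K_r;{}_{\beta}\mathbb{Z})$ is the corresponding twisted cohomology group. *)

(* Defs.v *)
From mathcomp Require Import all_boot all_order all_algebra.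
Set Implicit Arguments. Unset Strict Implicit. Unset Printing Implicit Defensive.
Import Order.TTheory GRing.Theory Num.Theory.
Local Open Scope ring_scope.

(* A letter is a pair (g, i):
   g = false : generator x,  g = true : generator y;
   i = false : the generator itself,  i = true : its inverse.
   A word need not be freely reduced: exponent sums and Fox derivatives
   are invariant under free reduction, so they are well defined on F(x,y). *)
Definition letter := (bool * bool)%type.
Definition word := seq letter.

Definition expsum (g : bool) (r : word) : int :=
  \sum_(l <- r | l.1 == g) (if l.2 then -1 else 1).
Definition delta_x (r : word) : int := expsum false r.
Definition delta_y (r : word) : int := expsum true r.

(* A homomorphism phi : F(x,y) -> Z_2 = {1,-1} is given by its values on the
   generators: phi(x) = (-1)^sx, phi(y) = (-1)^sy. *)
Definition sgnb (s : bool) : int := (-1) ^+ s.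
Definition phi_gen (sx sy : bool) (g : bool) : int := sgnb (if g then sy else sx).

(* Fox derivatives (d r/dx, d r/dy) pushed forward along beta (induced by phi)
   to Z[Z_2] -> Z (each group element acts on Z by the sign phi(.)).
   Uses d(l w) = d l + l . d w, d(x)/dx = 1, d(x^-1)/dx = -x^-1,
   and phi(x^-1) = phi(x) since phi takes values +-1. *)
Fixpoint twisted_fox (sx sy : bool) (r : word) : int * int :=
  match r with
  | [::] => (0, 0)
  | l :: w =>
      let v := phi_gen sx sy l.1 in
      let d := twisted_fox sx sy w in
      let lead := if l.2 then - v else 1 in
      ((if l.1 then 0 else lead) + v * d.1,
       (if l.1 then lead else 0) + v * d.2)
  end.

(* Twisted cellular cochain complex of K_r with coefficients in beta Z:
   C^0 = Z, C^1 = Z^2 (cells x, y), C^2 = Z (cell of r), and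
   delta^1 (f_x, f_y) = beta(dr/dx) f_x + beta(dr/dy) f_y.
   Since K_r is 2-dimensional, H^2(K_r; beta Z) = C^2 / im delta^1. *)
Definition coboundary1 (sx sy : bool) (r : word) (f : int * int) : int :=
  (twisted_fox sx sy r).1 * f.1 + (twisted_fox sx sy r).2 * f.2.

Definition im_coboundary1 (sx sy : bool) (r : word) (z : int) : Prop :=
  exists f : int * int, z = coboundary1 sx sy r f.

(* H^2(K_r; beta Z) = Z / im delta^1 is isomorphic (as abelian group) to Z/cZ:
   there is an additive map g : C^2 = Z -> Z inducing a well-defined, injective
   and surjective homomorphism Z / im delta^1 -> Z / cZ. *)
Definition H2_twisted_iso_Zmod (sx sy : bool) (r : word) (c : int) : Prop :=
  exists g : int -> int,
    (forall u v, g (u + v) = g u + g v) /\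
    (forall u v, im_coboundary1 sx sy r (u - v) <-> (g u == g v %[mod c])%Z) /\
    (forall w, exists u, (g u == w %[mod c])%Z).

(* Main.v *)
Require Import Defs.
From mathcomp Require Import all_boot all_order all_algebra.
Import Order.TTheory GRing.Theory Num.Theory.
Local Open Scope ring_scope.

Fixpoint phiw (sx sy : bool) (w : word) : int :=
  if w is l :: w' then phi_gen sx sy l.1 * phiw sx sy w' else 1.

Lemma fox_cat sx sy u w : twisted_fox sx sy (u ++ w) =
  ((twisted_fox sx sy u).1 + phiw sx sy u * (twisted_fox sx sy w).1,
   (twisted_fox sx sy u).2 + phiw sx sy u * (twisted_fox sx sy w).2).
Proof.
elim: u => [|l u IH] /=; first by rewrite !add0r !mul1r; case: (twisted_fox _ _ _).
by rewrite IH /= !mulrDr !addrA !mulrA.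
Qed.

Lemma phiw_cat sx sy u w : phiw sx sy (u ++ w) = phiw sx sy u * phiw sx sy w.
Proof. by elim: u => [|l u IH] /=; rewrite ?mul1r // IH mulrA. Qed.

Lemma expsum_cons g l w : expsum g (l :: w) =
  (if l.1 == g then (if l.2 then -1 else 1) else 0) + expsum g w.
Proof. by rewrite /expsum big_cons; case: ifP; rewrite ?add0r. Qed.

Lemma expsum_cat g u w : expsum g (u ++ w) = expsum g u + expsum g w.
Proof. by rewrite /expsum big_cat. Qed.

Definition pw (g : bool) (n : int) : word := nseq `|n|%N (g, n < 0).

Lemma sgn_muln (n : int) : (if n < 0 then -1 else 1) *+ `|n|%N = n.
Proof.
case: n => m /=; first exact: natz.
by rewrite mulNrn (natz m.+1) NegzE.
Qed.

Lemma expsum_nseq g h e k : expsum g (nseq k (h, e)) =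
  if h == g then (if e then -1 else 1) *+ k else 0.
Proof.
elim: k => [|k IH]; first by rewrite /expsum big_nil; case: ifP.
rewrite [nseq _ _]/= expsum_cons IH /=; case: ifP => _; rewrite ?add0r // mulrS.
by move: IH; case: e.
Qed.

Lemma expsum_pw g n : expsum g (pw g n) = n.
Proof. by rewrite expsum_nseq eqxx sgn_muln. Qed.
Lemma expsum_pw' g n : expsum g (pw (~~ g) n) = 0.
Proof. by rewrite expsum_nseq; case: g. Qed.

Lemma fox_nseq1 sx sy g e k : phi_gen sx sy g = 1 ->
  twisted_fox sx sy (nseq k (g, e)) =
   (if g then 0 else (if e then -1 else 1) *+ k,
    if g then (if e then -1 else 1) *+ k else 0) /\ phiw sx sy (nseq k (g,e)) = 1.
Proof.
case: g => hv; case: e; elim: k => [|k [IH1 IH2]] //=;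
  rewrite IH1 IH2 hv !mul1r /= ?add0r ?addr0 ?mulrS //.
Qed.

Lemma fox_nseqm sx sy g e k : phi_gen sx sy g = -1 ->
  twisted_fox sx sy (nseq k (g, e)) =
   (if g then 0 else (odd k)%:R, if g then (odd k)%:R else 0)
   /\ phiw sx sy (nseq k (g,e)) = (-1) ^+ k.
Proof.
case: g => hv; case: e; elim: k => [|k [IH1 IH2]] //=;
  rewrite IH1 IH2 hv exprS; case: (odd k); rewrite /= ?mulr0 ?addr0 ?mulN1r ?opprK ?mulr1 //.
Qed.

Lemma H2_of sx sy r c : (forall z, im_coboundary1 sx sy r z <-> (c %| z)%Z) ->
  H2_twisted_iso_Zmod sx sy r c.
Proof.
move=> h; exists id; split => //; split => [u v|w]; last by exists w.
by rewrite eqz_mod_dvd; apply: h.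
Qed.

Lemma im_of sx sy r c A B : twisted_fox sx sy r = (A, B) ->
  [\/ A = c /\ B = 0, A = 0 /\ B = c | A = c /\ B = - c] ->
  forall z, im_coboundary1 sx sy r z <-> (c %| z)%Z.
Proof.
rewrite /im_coboundary1 /coboundary1 => -> /= hAB z; split.
  case=> [[f1 f2]] /= ->.
  case: hAB => [][-> ->]; rewrite ?mul0r ?add0r ?addr0 ?mulNr ?mulNr -?mulrBr;
   by apply: dvdz_mulr; apply: dvdzz.
case/dvdzP => q ->.
case: hAB => [][-> ->].
- by exists (q, 0); rewrite /= mulr0 addr0 mulrC.
- by exists (0, q); rewrite /= mulr0 add0r mulrC.
- by exists (q, 0); rewrite /= mulr0 addr0 mulrC.
Qed.

Fixpoint xyw (k : nat) : word :=
  if k is k'.+1 then (false, false) :: (true, false) :: xyw k' else [::].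

Lemma xyw_prop k : twisted_fox true true (xyw k) = (k%:R, - k%:R) /\
  phiw true true (xyw k) = 1 /\ expsum false (xyw k) = k%:R /\ expsum true (xyw k) = k%:R.
Proof.
elim: k => [|k [IH1 [IH2 [IH3 IH4]]]]; first by rewrite /= /expsum !big_nil.
rewrite [xyw _]/= !expsum_cons /= IH3 IH4 /= IH1 IH2 /phi_gen /sgnb /=.
rewrite ?mulN1r ?opprK ?mulr1 ?mul1r ?add0r ?addr0 ?mulrS.
by rewrite opprK.
Qed.

From mathcomp Require Import zify.

Lemma odd_split {n} : odd n -> n = (n./2).*2.+1.
Proof. by move=> h; rewrite -[n in LHS]odd_double_half h. Qed.

Theorem proposition6p3 (c a b : int) (sx sy : bool) :
  1 <= c -> ~~ (2 %| c)%Z ->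
  2 <= a -> 2 <= b -> coprimez a b ->
  (sx || sy) ->
  (sgnb sx) ^+ `|a|%N * (sgnb sy) ^+ `|b|%N = 1 ->
  exists r : word,
    delta_x r = a /\ delta_y r = b /\ H2_twisted_iso_Zmod sx sy r c.
Proof.
case: c => cn; last by [].
case: a => an; last by [].
case: b => bn; last by move=> _ _ _ [].
move=> c1 c2 a2 b2 cop sxy hs.
have hc : odd cn.
  have h2 : ~~ (2 %| cn)%N := c2.
  by rewrite dvdn2 negbK in h2.
have {}cop : coprime an bn by move: cop; rewrite /coprimez /gcdz /=.
have nboth : ~~ (~~ odd an && ~~ odd bn).
  apply/negP => /andP [ea eb].
  have : (2 %| gcdn an bn)%N by rewrite dvdn_gcd !dvdn2 ea eb.
  by rewrite (eqP cop).
rewrite /= in hs.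
have ec := odd_split hc; set kc := cn./2 in ec.
case: an a2 nboth hs cop => [|[|an]] // _ nboth hs cop.
case: sx sy sxy hs => [] [] // _ hs.
-
  
  have oab : odd an.+2 && odd bn.
    move: hs nboth; rewrite /sgnb !expr1 -(signr_odd _ an.+2) -(signr_odd _ bn).
    by case: (odd an.+2); case: (odd bn).
  case/andP: oab => oa ob.
  have ea := odd_split oa; have eb := odd_split ob.
  set ka := (an.+2)./2 in ea; set kb := bn./2 in eb.
  pose ta := 2 * (ka%:Z - kc%:Z); pose tb := 2 * (kb%:Z - kc%:Z).
  exists (xyw cn ++ pw false ta ++ pw true tb).
  have [f1 [p1 [e1 e2]]] := xyw_prop cn.
  split; [|split].
  + rewrite /delta_x !expsum_cat /pw !expsum_nseq /= sgn_muln e1 /ta. lia.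
  + rewrite /delta_y !expsum_cat /pw !expsum_nseq /= sgn_muln e2 /tb; lia.
  + apply: H2_of; apply: (@im_of _ _ _ _ cn (- cn%:Z)); last by constructor 3.
    have [g1 q1] := @fox_nseqm true true false (ta < 0) `|ta|%N erefl.
    have [g2 q2] := @fox_nseqm true true true (tb < 0) `|tb|%N erefl.
    rewrite /pw !fox_cat ?phiw_cat f1 p1 g1 q1 g2 /ta /tb /=.
    rewrite !abszM !oddM /= !mulr0 ?addr0; congr pair; lia.
-
  have oa : ~~ odd an.+2.
    move: hs; rewrite /sgnb expr1 expr0 expr1n mulr1 -signr_odd /=.
    by case: (odd an) => //=; rewrite expr1 => /eqP.
  have ob : odd bn by move: nboth; rewrite oa /= negbK.
  have eb := odd_split ob; set kb := bn./2 in eb.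
  pose p := (kb + kc).+1; pose q := kb%:Z - kc%:Z.
  exists (nseq p (true, false) ++ nseq 1 (false, false) ++ pw true q ++ nseq an.+1 (false, false)).
  split; [|split].
  + rewrite /delta_x !expsum_cat /pw !expsum_nseq /=; lia.
  + rewrite /delta_y !expsum_cat /pw !expsum_nseq /= sgn_muln /q /p; lia.
  + apply: H2_of; apply: (@im_of _ _ _ _ 0 cn); last by constructor 2.
    have [g1 q1] := @fox_nseq1 true false true false p erefl.
    have [g2 q2] := @fox_nseqm true false false false 1 erefl.
    have [g3 q3] := @fox_nseq1 true false true (q < 0) `|q|%N erefl.
    have [g4 q4] := @fox_nseqm true false false false an.+1 erefl.
    rewrite /pw !fox_cat ?phiw_cat g1 q1 g2 q2 g3 q3 g4 /= sgn_muln.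
    move: oa; rewrite /= negbK => ->.
    congr pair; rewrite /q /p; lia.
-
  have ob : ~~ odd bn.
    move: hs; rewrite /sgnb expr1 expr0 expr1n mul1r -signr_odd.
    by case: (odd bn) => //=; rewrite expr1 => /eqP.
  have oa : odd an.+2 by move: nboth; rewrite ob andbT negbK.
  have ea := odd_split oa; set ka := (an.+2)./2 in ea.
  clear nboth hs; case: bn b2 ob cop => [|[|bn]] // _ ob cop.
  pose p := (ka + kc).+1; pose q := ka%:Z - kc%:Z.
  exists (nseq p (false, false) ++ nseq 1 (true, false) ++ pw false q ++ nseq bn.+1 (true, false)).
  split; [|split].
  + rewrite /delta_x !expsum_cat /pw !expsum_nseq /= sgn_muln /q /p; lia.
  + rewrite /delta_y !expsum_cat /pw !expsum_nseq /=; lia.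
  + apply: H2_of; apply: (@im_of _ _ _ _ cn 0); last by constructor 1.
    have [g1 q1] := @fox_nseq1 false true false false p erefl.
    have [g2 q2] := @fox_nseqm false true true false 1 erefl.
    have [g3 q3] := @fox_nseq1 false true false (q < 0) `|q|%N erefl.
    have [g4 q4] := @fox_nseqm false true true false bn.+1 erefl.
    rewrite /pw !fox_cat ?phiw_cat g1 q1 g2 q2 g3 q3 g4 /= sgn_muln.
    move: ob; rewrite /= negbK => ->.
    congr pair; rewrite /q /p; lia.
Qed.
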